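(* Let $\mathcal{Q}$ be a $d$-GMK instance with time horizon $T$, let $U=\{u_0,\ldots,u_k\}$ be a set of cut points of $T$, let $\mathcal{Q}_U=(q_j)_{j=0}^{k-1}$ be the cut instances of $\mathcal{Q}$ w.r.t. $U$, and for each $j$ let $(S_t,\mathcal{A}_t)_{t=u_j}^{u_{j+1}-1}$ be a feasible solution for $q_j$. Then the cut solution $(S_t,\mathcal{A}_t)_{t=1}^{T}$ is a feasible solution for $\mathcal{Q}$, and $f_{\mathcal{Q}}\left((S_t)_{t=1}^T\right)\ \geq\ \sum_{j=0}^{k-1} f_{q_j}\left((S_t)_{t=u_j}^{u_{j+1}-1}\right).$
   Context: A Multiple Knapsack Constraint (MKC) over an item set $I$ is $K=(w,B,W)$ with weights $w:I\to\mathbb{R}_+$, a set of bins $B$ and capacities $W:B\to\mathbb{R}_+$; an assignment $A:B\to 2^I$ is feasible if $\sum_{i\in A(b)}w(i)\le W(b)$ for every bin $b$, and it is an assignment of $S$ if $S=\cup_{b\in B}A(b)$. A $d$-MKCP instance is $(I,\mathcal{K},p)$ with $\mathcal{K}$ a tuple of $d$ MKCs and $p:I\to\mathbb{R}_{\ge0}$; a feasible solution is a set $S\subseteq I$ together with a tuple $\mathcal{A}$ of feasible assignments of $S$, one per MKC. A $d$-GMK instance is $\mathcal{Q}=((\mathcal{P}_t)_{t=1}^T,g^+,g^-,c^+,c^-)$, where $\mathcal{P}_t=(I,\mathcal{K}_t,p_t)$ is a $d_t$-MKCP instance ($d_t\le d$), $g^+,g^-\in\mathbb{R}_+^{I\times[2,T]}$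 are gains and $c^+,c^-\in\mathbb{R}_+^{I\times[1,T]}$ are change costs. A feasible solution is $(S_t,\mathcal{A}_t)_{t=1}^T$ with $(S_t,\mathcal{A}_t)$ feasible for $\mathcal{P}_t$; with $S_0=S_{T+1}=\emptyset$ its value is $f_{\mathcal{Q}}((S_t)_{t=1}^T)=\sum_{t=1}^T\sum_{i\in S_t}p_t(i)+\sum_{t=2}^T\big(\sum_{i\in S_{t-1}\cap S_t}g^+_{i,t}+\sum_{i\notin S_{t-1}\cup S_t}g^-_{i,t}\big)-\sum_{t=1}^T\big(\sum_{i\in S_t\setminus S_{t-1}}c^+_{i,t}+\sum_{i\in S_t\setminus S_{t+1}}c^-_{i,t}\big)$. A set of cut points of $T$ is $U=\{u_0,\ldots,u_k\}$ of integers with $u_j<u_{j+1}$, $u_0=1$, $u_k=T+1$. The cut instances of $\mathcal{Q}$ w.r.t. $U$ are $q_j=((\mathcal{P}_t)_{t=u_j}^{u_{j+1}-1},g^+,g^-,c^+,c^-)$ for $j=0,\ldots,k-1$, i.e. the sub-instance on the stage range $[u_j,u_{j+1}-1]$ without shifting or truncating the gain and cost vectors; when evaluating a solution of the sub-instance on range $[t_1,t_2]$ by the same formula restricted to that range, one assumes $S_{t_1-1}=S_{t_2+1}=\emptyset$ (so entry costs $c^+$ at $t_1$ and exit costs $c^-$ at $t_2$ are charged, and gains at $t_1$ are not counted). Given feasible solutions $(S_t,\mathcal{A}_t)_{t=u_j}^{u_{j+1}-1}$ for each cut instance $q_j$, the concatenation $(S_t,\mathcal{A}_t)_{t=1}^T$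 is called the cut solution for $\mathcal{Q}$. *)

(* Defs.v *)
From mathcomp Require Import all_boot all_order all_algebra.
Set Implicit Arguments. Unset Strict Implicit. Unset Printing Implicit Defensive.
Import Order.TTheory GRing.Theory Num.Theory.
Local Open Scope ring_scope.

Section GMK.
Variables (I : finType) (R : realFieldType).

Record MKC := mkMKC {
  nbins : nat;
  wt : I -> R;
  cap : 'I_nbins -> R
}.
Arguments cap : clear implicits.

Definition MKC_wf (K : MKC) := (forall i, 0 <= wt K i) /\ (forall b, 0 <= cap K b).

Definition assignment (K : MKC) := 'I_(nbins K) -> {set I}.

Definition feasible_assignment (K : MKC) (A : assignment K) :=
  forall b : 'I_(nbins K), \sum_(i in A b) wt K i <= cap K b.

Definition assignment_of (K : MKC) (A : assignment K) (S : {set I}) :=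
  S = \bigcup_(b < nbins K) A b.

Record MKCP := mkMKCP {
  cons : seq MKC;
  prof : I -> R
}.

Definition MKCP_wf (d : nat) (P : MKCP) :=
  size (cons P) = d /\ (forall k : 'I_(size (cons P)), MKC_wf (tnth (in_tuple (cons P)) k))
  /\ (forall i, 0 <= prof P i).

Definition assignments (Ks : seq MKC) :=
  forall k : 'I_(size Ks), assignment (tnth (in_tuple Ks) k).

Definition MKCP_feasible (P : MKCP) (S : {set I}) (As : assignments (cons P)) :=
  forall k : 'I_(size (cons P)),
    feasible_assignment (As k) /\ assignment_of (As k) S.

(* A d-GMK instance ((P_t)_t, g+, g-, c+, c-); stages are indexed by t in [1,T]. *)
Record GMK := mkGMK {
  stage : nat -> MKCP;
  gplus : I -> nat -> R;
  gminus : I -> nat -> R;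
  cplus : I -> nat -> R;
  cminus : I -> nat -> R
}.

Definition GMK_wf (d T : nat) (Q : GMK) :=
  (forall t, (1 <= t <= T)%N ->
     exists dt, (dt <= d)%N /\ MKCP_wf dt (stage Q t))
  /\ (forall i t, (2 <= t <= T)%N -> 0 <= gplus Q i t /\ 0 <= gminus Q i t)
  /\ (forall i t, (1 <= t <= T)%N -> 0 <= cplus Q i t /\ 0 <= cminus Q i t).

Definition GMK_feasible (Q : GMK) (t1 t2 : nat) (S : nat -> {set I})
    (As : forall t, assignments (cons (stage Q t))) :=
  forall t, (t1 <= t <= t2)%N -> MKCP_feasible (S t) (As t).

(* Value of (S_t)_{t=t1}^{t2} for the instance Q restricted to [t1, t2],
   with S_{t1-1} = S_{t2+1} = emptyset. *)
Definition GMK_value (Q : GMK) (t1 t2 : nat) (S : nat -> {set I}) : R :=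
  let S' := fun t => if (t1 <= t <= t2)%N then S t else set0 in
  \sum_(t1 <= t < t2.+1) \sum_(i in S' t) prof (stage Q t) i
  + \sum_(t1.+1 <= t < t2.+1)
      (\sum_(i in S' t.-1 :&: S' t) gplus Q i t
       + \sum_(i in ~: (S' t.-1 :|: S' t)) gminus Q i t)
  - \sum_(t1 <= t < t2.+1)
      (\sum_(i in S' t :\: S' t.-1) cplus Q i t
       + \sum_(i in S' t :\: S' t.+1) cminus Q i t).

Definition cut_points (T : nat) (u : seq nat) :=
  sorted ltn u /\ nth 0%N u 0 = 1%N /\ last 0%N u = T.+1.

End GMK.
Arguments GMK_feasible {I R} Q t1 t2 S As.

(* Main.v *)
Require Import Defs.
From mathcomp Require Import all_boot all_order all_algebra.
From mathcomp Require Import lra zify.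
Import Order.TTheory GRing.Theory Num.Theory.
Local Open Scope ring_scope.

Lemma sum_sub (I : finType) (R : realFieldType) (A B : {set I}) (w : I -> R) :
  A \subset B -> (forall i, 0 <= w i) -> \sum_(i in A) w i <= \sum_(i in B) w i.
Proof.
move=> AB w0; rewrite [X in _ <= X](big_setID A) /= (setIidPr AB) lerDl.
by apply: sumr_ge0.
Qed.

Section Aux.
Variables (I : finType) (R : realFieldType) (Q : GMK I R) (S : nat -> {set I}).

Definition Sp (a b : nat) := fun t => if (a <= t <= b)%N then S t else set0.
Definition prof_s (X : nat -> {set I}) t := \sum_(i in X t) prof (stage Q t) i.
Definition gain_s (X : nat -> {set I}) t :=
  \sum_(i in X t.-1 :&: X t) gplus Q i t + \sum_(i in ~: (X t.-1 :|: X t)) gminus Q i t.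
Definition cost_s (X : nat -> {set I}) t :=
  \sum_(i in X t :\: X t.-1) cplus Q i t + \sum_(i in X t :\: X t.+1) cminus Q i t.

Lemma valueE a b : GMK_value Q a b S =
  \sum_(a <= t < b.+1) prof_s (Sp a b) t + \sum_(a.+1 <= t < b.+1) gain_s (Sp a b) t
  - \sum_(a <= t < b.+1) cost_s (Sp a b) t.
Proof. by []. Qed.

Lemma Sp_in a b t : (a <= t <= b)%N -> Sp a b t = S t.
Proof. by rewrite /Sp => ->. Qed.

Lemma Sp_sub a b a' b' t : (a <= a')%N -> (b' <= b)%N -> Sp a' b' t \subset Sp a b t.
Proof.
rewrite /Sp => h1 h2; case: ifP => h; last exact: sub0set.
have -> : (a <= t <= b)%N by apply/andP; move/andP: h => [x y]; split; lia.
exact: subxx.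
Qed.

Lemma cost_mono a b a' b' t : (a <= a')%N -> (b' <= b)%N -> (a' <= t <= b')%N ->
  (forall i, 0 <= cplus Q i t /\ 0 <= cminus Q i t) ->
  cost_s (Sp a b) t <= cost_s (Sp a' b') t.
Proof.
move=> h1 h2 ht w0; rewrite /cost_s.
have e : Sp a b t = Sp a' b' t.
  rewrite Sp_in ?Sp_in //; apply/andP; move/andP: ht => [x y]; split; lia.
rewrite e; apply: lerD; apply: sum_sub; try by move=> i; case: (w0 i).
- by apply: setDS; apply: Sp_sub.
- by apply: setDS; apply: Sp_sub.
Qed.

Lemma split_val T a m b :
  (forall i t, (2 <= t <= T)%N -> 0 <= gplus Q i t /\ 0 <= gminus Q i t) ->
  (forall i t, (1 <= t <= T)%N -> 0 <= cplus Q i t /\ 0 <= cminus Q i t) ->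
  (0 < a)%N -> (a < m)%N -> (m <= b)%N -> (b <= T)%N ->
  GMK_value Q a m.-1 S + GMK_value Q m b S <= GMK_value Q a b S.
Proof.
move=> hg hc ha ham hmb hbT.
rewrite !valueE (prednK (ltn_trans ha ham)).
have Pe : \sum_(a <= t < b.+1) prof_s (Sp a b) t =
   \sum_(a <= t < m) prof_s (Sp a m.-1) t + \sum_(m <= t < b.+1) prof_s (Sp m b) t.
  have h1 : (a <= m)%N by lia. have h2 : (m <= b.+1)%N by lia.
  rewrite (big_cat_nat h1 h2).
  congr (_ + _).
    apply: eq_big_nat => t ht; rewrite /prof_s !Sp_in //;
    move/andP: ht => [x y]; apply/andP; split; lia.
  apply: eq_big_nat => t ht; rewrite /prof_s !Sp_in //;
  move/andP: ht => [x y]; apply/andP; split; lia.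
have Ge : \sum_(a.+1 <= t < b.+1) gain_s (Sp a b) t =
   \sum_(a.+1 <= t < m) gain_s (Sp a m.-1) t + gain_s (Sp a b) m
   + \sum_(m.+1 <= t < b.+1) gain_s (Sp m b) t.
  have h1 : (a.+1 <= m)%N by lia. have h2 : (m <= b.+1)%N by lia.
  have h3 : (m < b.+1)%N by lia.
  have e1 : \sum_(a.+1 <= t < m) gain_s (Sp a b) t = \sum_(a.+1 <= t < m) gain_s (Sp a m.-1) t.
    apply: eq_big_nat => t ht; rewrite /gain_s !Sp_in //;
    move/andP: ht => [x y]; apply/andP; split; lia.
  have e2 : \sum_(m.+1 <= t < b.+1) gain_s (Sp a b) t = \sum_(m.+1 <= t < b.+1) gain_s (Sp m b) t.
    apply: eq_big_nat => t ht; rewrite /gain_s !Sp_in //;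
    move/andP: ht => [x y]; apply/andP; split; lia.
  rewrite (big_cat_nat h1 h2) (big_ltn h3) e1 e2 /=.
  by rewrite addrA.
have Gm : 0 <= gain_s (Sp a b) m.
  rewrite /gain_s; apply: addr_ge0; apply: sumr_ge0 => i _;
  have [] := hg i m ltac:(apply/andP; split; lia) => //.
have Ce : \sum_(a <= t < b.+1) cost_s (Sp a b) t <=
   \sum_(a <= t < m) cost_s (Sp a m.-1) t + \sum_(m <= t < b.+1) cost_s (Sp m b) t.
  have h1 : (a <= m)%N by lia. have h2 : (m <= b.+1)%N by lia.
  rewrite (big_cat_nat h1 h2).
  apply: lerD; apply: ler_sum_nat => t ht; apply: cost_mono; try lia;
    try (move/andP: ht => [x y]; apply/andP; split; lia);
    move=> i; apply: hc; move/andP: ht => [x y]; apply/andP; split; lia.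
rewrite Pe Ge; lra.
Qed.


Lemma path_last (x : nat) s : path ltn x s -> (x <= last x s)%N.
Proof.
elim: s x => [|y s IH] x //= /andP [h1 h2].
have := IH _ h2; lia.
Qed.

Variable As : forall t, assignments (cons (stage Q t)).

Lemma chain T :
  (forall i t, (2 <= t <= T)%N -> 0 <= gplus Q i t /\ 0 <= gminus Q i t) ->
  (forall i t, (1 <= t <= T)%N -> 0 <= cplus Q i t /\ 0 <= cminus Q i t) ->
  forall s x, sorted ltn (x :: s) -> (0 < x)%N -> (last x s <= T.+1)%N -> s != [::] ->
  (forall j, (j < size s)%N ->
     GMK_feasible Q (nth 0%N (x :: s) j) (nth 0%N (x :: s) j.+1).-1 S As) ->
  GMK_feasible Q x (last x s).-1 S As /\
  \sum_(j < size s) GMK_value Q (nth 0%N (x :: s) j) (nth 0%N (x :: s) j.+1).-1 S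
    <= GMK_value Q x (last x s).-1 S.
Proof.
move=> hg hc; elim=> [|y s IH] x // hs hx hl _ hf.
case: s IH hs hl hf => [|z s] IH hs hl hf.
  split; first exact: (hf 0%N).
  by rewrite big_ord1.
move: (hs) => /= /andP [hxy hs'].
have hpos : (0 < y)%N by lia.
have [IHf IHv] := IH y hs' hpos hl isT (fun j hj => hf j.+1 hj).
move: (hs') => /= /andP [hyz hs''].
have hzl := @path_last z s hs''.
split.
  move=> t /andP [h1 h2].
  case: (ltnP t y) => hty.
    apply: (hf 0%N) => //=; apply/andP; split; lia.
  apply: IHf; apply/andP; split => //.
rewrite big_ord_recl /=.
under eq_bigr => i _ do rewrite add0n.
have h1 : (y <= (last z s).-1)%N by lia.
have h2 : ((last z s).-1 <= T)%N by move: hl => /= hl; lia.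
apply: le_trans (@split_val T x y (last z s).-1 hg hc hx hxy h1 h2).
by apply: lerD.
Qed.

End Aux.

Theorem corollary13 (I : finType) (R : realFieldType) (d T : nat)
    (Q : GMK I R) (u : seq nat)
    (S : nat -> {set I}) (As : forall t, assignments (cons (stage Q t))) :
  GMK_wf d T Q ->
  cut_points T u ->
  (forall j, (j < (size u).-1)%N ->
     GMK_feasible Q (nth 0%N u j) (nth 0%N u j.+1).-1 S As) ->
  GMK_feasible Q 1 T S As /\
  GMK_value Q 1 T S >=
    \sum_(j < (size u).-1) GMK_value Q (nth 0%N u j) (nth 0%N u j.+1).-1 S.
Proof.
move=> [_ [hg hc]] [hs [h0 hl]] hf.
case: u h0 hs hl hf => [|x s] //= -> hs hl hf.
case: s hs hl hf => [|y s] hs hl hf.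
  move: hl => /= [hT]; subst T.
  split; first by move=> t /andP [h1 h2]; lia.
  by rewrite big_ord0 valueE !big_geq // subr0 addr0.
have := @chain I R Q S As T hg hc (y :: s) 1%N hs isT _ isT hf.
by rewrite hl /= => /(_ (leqnn _)).
Qed.
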